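(* Let $a,b,d,f\in\mathbb{C}$ with $b\neq0$ and $d\neq 0$. Then the node-wise equi-M sets of the two nodes coincide: $\mathcal{M}(z_1)=\mathcal{M}(z_2)$.
   Context: For $c\in\mathbb{C}$, the 2D coupled quadratic system with connectivity matrix $A=\begin{pmatrix}a&b\\ d&f\end{pmatrix}$ is the iteration $z_1(n+1)=(az_1(n)+bz_2(n))^2+c$, $z_2(n+1)=(dz_1(n)+fz_2(n))^2+c$. The critical orbit is the orbit with $z_1(0)=z_2(0)=0$. The node-wise equi-M set $\mathcal{M}(z_k)$ ($k=1,2$) is the set of $c\in\mathbb{C}$ for which the sequence $(z_k(n))_{n\ge0}$ of the critical orbit is bounded. *)

(* Defs.v *)
From Stdlib Require Import Reals.
From Coquelicot Require Import Coquelicot.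
Open Scope R_scope.

(* Critical orbit of the 2D coupled quadratic system with connectivity
   matrix A = [[a, b], [d, f]]:
   z1(n+1) = (a z1(n) + b z2(n))^2 + c,  z2(n+1) = (d z1(n) + f z2(n))^2 + c,
   z1(0) = z2(0) = 0. *)
Fixpoint crit_orbit (a b d f c : C) (n : nat) : C * C :=
  match n with
  | O => (RtoC 0, RtoC 0)
  | S m =>
      let (z1, z2) := crit_orbit a b d f c m in
      (Cplus (Cmult (Cplus (Cmult a z1) (Cmult b z2)) (Cplus (Cmult a z1) (Cmult b z2))) c,
       Cplus (Cmult (Cplus (Cmult d z1) (Cmult f z2)) (Cplus (Cmult d z1) (Cmult f z2))) c)
  end.

Definition z1 (a b d f c : C) (n : nat) : C := fst (crit_orbit a b d f c n).
Definition z2 (a b d f c : C) (n : nat) : C := snd (crit_orbit a b d f c n).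

Definition bounded_seq (u : nat -> C) : Prop :=
  exists M : R, forall n : nat, Cmod (u n) <= M.

Definition equiM1 (a b d f : C) (c : C) : Prop := bounded_seq (z1 a b d f c).
Definition equiM2 (a b d f : C) (c : C) : Prop := bounded_seq (z2 a b d f c).

(* Main.v *)
Require Import Defs.
From Stdlib Require Import Reals Lra.
From Coquelicot Require Import Coquelicot.

Lemma gen_bound (x y : nat -> C) (p q c : C) :
  (forall n, x (S n) = Cplus (Cmult (Cplus (Cmult p (x n)) (Cmult q (y n)))
                                    (Cplus (Cmult p (x n)) (Cmult q (y n)))) c) ->
  q <> RtoC 0 -> bounded_seq x -> bounded_seq y.
Proof.
  intros Hrec hq [M HM].
  assert (Hq : 0 < Cmod q).
  { destruct (Rle_lt_or_eq_dec 0 (Cmod q) (Cmod_ge_0 q)) as [h|h]; auto.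
    exfalso; apply hq, Cmod_eq_0; auto. }
  exists ((M + Cmod c + 1 + Cmod p * M) / Cmod q).
  intro n.
  set (w := Cplus (Cmult p (x n)) (Cmult q (y n))).
  assert (Hw2 : Cmod w * Cmod w <= M + Cmod c).
  { rewrite <- Cmod_mult.
    assert (E : Cmult w w = Cminus (x (S n)) c).
    { rewrite Hrec. fold w. unfold Cminus. rewrite <- Cplus_assoc, Cplus_opp_r, Cplus_0_r. reflexivity. }
    rewrite E. unfold Cminus. eapply Rle_trans. apply Cmod_triangle.
    rewrite Cmod_opp. specialize (HM (S n)). lra. }
  assert (Hw : Cmod w <= M + Cmod c + 1).
  { pose proof (Cmod_ge_0 w). destruct (Rle_or_lt (Cmod w) 1). 
    - pose proof (Cmod_ge_0 c). pose proof (HM O). pose proof (Cmod_ge_0 (x O)). lra.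
    - nra. }
  assert (Ey : Cmult q (y n) = Cminus w (Cmult p (x n))).
  { unfold w, Cminus. rewrite (Cplus_comm (Cmult p (x n))), <- Cplus_assoc, Cplus_opp_r, Cplus_0_r. reflexivity. }
  assert (Hqy : Cmod q * Cmod (y n) <= M + Cmod c + 1 + Cmod p * M).
  { rewrite <- Cmod_mult, Ey. unfold Cminus. eapply Rle_trans. apply Cmod_triangle.
    rewrite Cmod_opp, Cmod_mult. pose proof (HM n). pose proof (Cmod_ge_0 p).
    assert (Cmod p * Cmod (x n) <= Cmod p * M) by (apply Rmult_le_compat_l; lra). lra. }
  apply (Rmult_le_reg_l (Cmod q)); auto.
  unfold Rdiv. rewrite (Rmult_comm _ (/ Cmod q)), <- Rmult_assoc, Rinv_r by lra. lra.
Qed.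

Theorem mainTheorem7 (a b d f : C) (hb : b <> (RtoC 0)) (hd : d <> (RtoC 0)) :
  forall c : C, equiM1 a b d f c <-> equiM2 a b d f c.
Proof.
  intro c. unfold equiM1, equiM2. split.
  - apply (gen_bound _ _ a b c); auto.
    intro n. unfold z1, z2. simpl. destruct (crit_orbit a b d f c n). reflexivity.
  - apply (gen_bound _ _ f d c); auto.
    intro n. unfold z1, z2. simpl. destruct (crit_orbit a b d f c n); simpl.
    rewrite (Cplus_comm (Cmult f _)). reflexivity.
Qed.
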